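(* Let $S\subset\mathbb{R}^3$ be a $C^3$ surface and let $\Gamma$ be a closed asymptotic curve of $S$ contained in the region $\{K<0\}$. Let $(x,t)\in[0,x_0)\times[0,t_0)$ be a semi-global coordinate system near $\Gamma$ (periodic in $x$ with period $x_0$) such that $\{t=0\}$ is $\Gamma$ and each curve $\{t=\mathrm{const}\}$ is a closed curve homotopic to $\Gamma$, and write the second fundamental form as $II=L\,dx^2+2M\,dx\,dt+N\,dt^2$ (so $L(x,0)=0$ and $M(x,0)\neq0$). Then $$\int_{0}^{x_{0}}M^{-1}\,\partial_{t}L(x,0)\,dx=\pm\int_{\Gamma}k_{g}k_{n}|K|^{-1/2}\,ds,$$ where the sign is fixed (determined by the sign of $M$ along $\Gamma$).
   Context: $K$ is Gaussian curvature. An asymptotic curve is a curve whose tangent direction has zero normal curvature at every point. $k_g$ is the geodesic curvature of $\Gamma$, $k_n$ is the normal curvature of $S$ in the direction tangent to $S$ and perpendicular to $\Gamma$, and $ds$ is arclength along $\Gamma$. *)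

(* Defs.v *)
From Stdlib Require Import Reals Lra.
Open Scope R_scope.

Definition V3 : Type := (R * R * R)%type.
Definition vx (v : V3) : R := fst (fst v).
Definition vy (v : V3) : R := snd (fst v).
Definition vz (v : V3) : R := snd v.
Definition mkV (a b c : R) : V3 := (a, b, c).
Definition dot (u v : V3) : R := vx u * vx v + vy u * vy v + vz u * vz v.
Definition cross (u v : V3) : V3 :=
  mkV (vy u * vz v - vz u * vy v)
      (vz u * vx v - vx u * vz v)
      (vx u * vy v - vy u * vx v).
Definition scal (a : R) (v : V3) : V3 := mkV (a * vx v) (a * vy v) (a * vz v).
Definition vnorm (v : V3) : R := sqrt (dot v v).
Definition vzero : V3 := mkV 0 0 0.

Definition tdom (t0 t : R) : Prop := 0 <= t < t0.

(** derivative of a one-variable function relative to a subset P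
    (one-sided at boundary points such as t = 0) *)
Definition deriv_in (P : R -> Prop) (f : R -> R) (a l : R) : Prop :=
  forall eps, 0 < eps -> exists delta, 0 < delta /\
    forall h, h <> 0 -> Rabs h < delta -> P (a + h) ->
      Rabs ((f (a + h) - f a) / h - l) < eps.

Definition cont2 (t0 : R) (f : R -> R -> R) : Prop :=
  forall x t, tdom t0 t -> forall eps, 0 < eps -> exists delta, 0 < delta /\
    forall x' t', tdom t0 t' -> Rabs (x' - x) < delta -> Rabs (t' - t) < delta ->
      Rabs (f x' t' - f x t) < eps.

Definition is_px (t0 : R) (f g : R -> R -> R) : Prop :=
  forall x t, tdom t0 t -> derivable_pt_lim (fun y => f y t) x (g x t).
Definition is_pt (t0 : R) (f g : R -> R -> R) : Prop :=
  forall x t, tdom t0 t -> deriv_in (tdom t0) (fun s => f x s) t (g x t).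

Fixpoint Ck (k : nat) (t0 : R) (f : R -> R -> R) : Prop :=
  cont2 t0 f /\
  match k with
  | O => True
  | S k' => exists fx ft : R -> R -> R,
      is_px t0 f fx /\ is_pt t0 f ft /\ Ck k' t0 fx /\ Ck k' t0 ft
  end.

Definition Ck_v (k : nat) (t0 : R) (X : R -> R -> V3) : Prop :=
  Ck k t0 (fun x t => vx (X x t)) /\ Ck k t0 (fun x t => vy (X x t)) /\
  Ck k t0 (fun x t => vz (X x t)).
Definition is_px_v (t0 : R) (X Y : R -> R -> V3) : Prop :=
  is_px t0 (fun x t => vx (X x t)) (fun x t => vx (Y x t)) /\
  is_px t0 (fun x t => vy (X x t)) (fun x t => vy (Y x t)) /\
  is_px t0 (fun x t => vz (X x t)) (fun x t => vz (Y x t)).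
Definition is_pt_v (t0 : R) (X Y : R -> R -> V3) : Prop :=
  is_pt t0 (fun x t => vx (X x t)) (fun x t => vx (Y x t)) /\
  is_pt t0 (fun x t => vy (X x t)) (fun x t => vy (Y x t)) /\
  is_pt t0 (fun x t => vz (X x t)) (fun x t => vz (Y x t)).

Definition unormal (Xx Xt : V3) : V3 := scal (/ vnorm (cross Xx Xt)) (cross Xx Xt).

Definition ffE (Xx Xt : V3) : R := dot Xx Xx.
Definition ffF (Xx Xt : V3) : R := dot Xx Xt.
Definition ffG (Xx Xt : V3) : R := dot Xt Xt.

Definition sfL (Xx Xt Xxx : V3) : R := dot Xxx (unormal Xx Xt).
Definition sfM (Xx Xt Xxt : V3) : R := dot Xxt (unormal Xx Xt).
Definition sfN (Xx Xt Xtt : V3) : R := dot Xtt (unormal Xx Xt).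

Definition gaussK (Xx Xt Xxx Xxt Xtt : V3) : R :=
  (sfL Xx Xt Xxx * sfN Xx Xt Xtt - sfM Xx Xt Xxt ^ 2) /
  (ffE Xx Xt * ffG Xx Xt - ffF Xx Xt ^ 2).

(** normal curvature II(w,w)/I(w,w) in the tangent direction w = a X_x + b X_t *)
Definition normal_curv (Xx Xt Xxx Xxt Xtt : V3) (a b : R) : R :=
  (sfL Xx Xt Xxx * a ^ 2 + 2 * sfM Xx Xt Xxt * a * b + sfN Xx Xt Xtt * b ^ 2) /
  (ffE Xx Xt * a ^ 2 + 2 * ffF Xx Xt * a * b + ffG Xx Xt * b ^ 2).

(** normal curvature k_n in the tangent direction perpendicular to X_x:
    w = -F X_x + E X_t satisfies <w, X_x> = 0. *)
Definition kn_perp (Xx Xt Xxx Xxt Xtt : V3) : R :=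
  normal_curv Xx Xt Xxx Xxt Xtt (- ffF Xx Xt) (ffE Xx Xt).

(** geodesic curvature of a curve c with velocity c' and acceleration c''
    on the surface with unit normal n:  k_g = <c'', n x c'> / |c'|^3
    (i.e. k_g = <dT/ds, n x T>, T the unit tangent). *)
Definition geod_curv (c' c'' n : V3) : R := dot c'' (cross n c') / (vnorm c') ^ 3.

(* Main.v *)
Require Import Defs.
From Stdlib Require Import Reals Lra FunctionalExtensionality.
Open Scope R_scope.

Lemma deriv_in_uniq t0 t f l1 l2 : tdom t0 t ->
  deriv_in (tdom t0) f t l1 -> deriv_in (tdom t0) f t l2 -> l1 = l2.
Proof.
  intros [Ht1 Ht2] H1 H2.
  destruct (Req_dec l1 l2) as [|Hn]; [assumption|exfalso].
  set (e := Rabs (l1 - l2) / 2).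
  assert (Hn' : l1 - l2 <> 0) by (intro; apply Hn; lra).
  assert (He : 0 < e) by (unfold e; apply Rabs_pos_lt in Hn'; lra).
  destruct (H1 e He) as [d1 [Hd1 P1]]. destruct (H2 e He) as [d2 [Hd2 P2]].
  set (h := Rmin (Rmin d1 d2) (t0 - t) / 2).
  assert (Hh0 : 0 < Rmin (Rmin d1 d2) (t0 - t)) by (repeat apply Rmin_pos; lra).
  assert (Hh : 0 < h) by (unfold h; lra).
  assert (Hh1 : h < d1) by (unfold h; pose proof (Rmin_l (Rmin d1 d2) (t0-t)); pose proof (Rmin_l d1 d2); lra).
  assert (Hh2 : h < d2) by (unfold h; pose proof (Rmin_l (Rmin d1 d2) (t0-t)); pose proof (Rmin_r d1 d2); lra).
  assert (Hh3 : h < t0 - t) by (unfold h; pose proof (Rmin_r (Rmin d1 d2) (t0-t)); lra).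
  assert (Ha : Rabs h = h) by (apply Rabs_right; lra).
  assert (Hp : tdom t0 (t + h)) by (split; lra).
  specialize (P1 h ltac:(lra) ltac:(lra) Hp). specialize (P2 h ltac:(lra) ltac:(lra) Hp).
  set (q := (f (t + h) - f t) / h) in *.
  assert (Rabs (l1 - l2) <= Rabs (q - l2) + Rabs (q - l1)).
  { replace (l1 - l2) with ((q - l2) - (q - l1)) by ring.
    eapply Rle_trans; [apply Rabs_triang|]. rewrite Rabs_Ropp. lra. }
  unfold e in *. lra.
Qed.

Lemma deriv_in_interior t0 t f l : 0 < t < t0 ->
  deriv_in (tdom t0) f t l -> derivable_pt_lim f t l.
Proof.
  intros Ht H eps Heps. destruct (H eps Heps) as [d [Hd P]].
  assert (Hm : 0 < Rmin d (Rmin t (t0 - t))) by (repeat apply Rmin_pos; lra).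
  exists (mkposreal _ Hm). simpl. intros h Hh Hlt.
  pose proof (Rmin_l d (Rmin t (t0 - t))). pose proof (Rmin_r d (Rmin t (t0 - t))).
  pose proof (Rmin_l t (t0 - t)). pose proof (Rmin_r t (t0 - t)).
  apply P; auto; [lra|]. apply Rabs_def2 in Hlt. split; lra.
Qed.

Lemma deriv_in_ext t0 t f g l : (forall s, tdom t0 s -> f s = g s) -> tdom t0 t ->
  deriv_in (tdom t0) f t l -> deriv_in (tdom t0) g t l.
Proof.
  intros He Ht H eps Heps. destruct (H eps Heps) as [d [Hd P]]. exists d; split; auto.
  intros h Hh Hl Hp. rewrite <- !He; auto.
Qed.

Definition liftf (f : R -> R) (l : R) := fun s => if Rlt_dec s 0 then f 0 + l * s else f s.

Lemma lift0 t0 f l : 0 < t0 -> deriv_in (tdom t0) f 0 l -> derivable_pt_lim (liftf f l) 0 l.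
Proof.
  intros Ht H eps Heps. destruct (H eps Heps) as [d [Hd P]].
  assert (Hm : 0 < Rmin d t0) by (apply Rmin_pos; lra).
  exists (mkposreal _ Hm). simpl. intros h Hh Hlt.
  pose proof (Rmin_l d t0). pose proof (Rmin_r d t0).
  unfold liftf. destruct (Rlt_dec 0 0); [lra|].
  destruct (Rlt_dec (0 + h) 0).
  - replace ((f 0 + l * (0 + h) - f 0) / h - l) with 0 by (field; auto).
    rewrite Rabs_R0; lra.
  - apply P; auto; [lra|]. apply Rabs_def2 in Hlt. split; lra.
Qed.

Lemma liftf_eq f l s : 0 <= s -> liftf f l s = f s.
Proof. intros; unfold liftf; destruct (Rlt_dec s 0); lra || reflexivity. Qed.

Lemma drop0 t0 f g l : 0 < t0 -> derivable_pt_lim g 0 l ->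
  (forall s, tdom t0 s -> g s = f s) -> deriv_in (tdom t0) f 0 l.
Proof.
  intros Ht H He eps Heps. destruct (H eps Heps) as [d P]. exists d; split; [apply cond_pos|].
  intros h Hh Hl Hp. rewrite <- !He; [apply P; auto| |]; auto. split; lra.
Qed.

Lemma small_zero d : (forall eps, 0 < eps -> Rabs d < eps) -> d = 0.
Proof.
  intros H. destruct (Req_dec d 0) as [|Hn]; auto.
  apply Rabs_pos_lt in Hn. specialize (H _ Hn). lra.
Qed.

Lemma schwarz t0 f fx ft fxt ftx : 0 < t0 -> is_px t0 f fx -> is_pt t0 f ft ->
  is_pt t0 fx fxt -> is_px t0 ft ftx -> cont2 t0 fxt -> cont2 t0 ftx ->
  forall x, fxt x 0 = ftx x 0.
Proof.
  intros Ht0 Hfx Hft Hfxt Hftx C1 C2 x.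
  assert (Hd0 : tdom t0 0) by (split; lra).
  apply Rminus_diag_uniq. apply small_zero. intros eps Heps.
  assert (He2 : 0 < eps / 2) by lra.
  destruct (C1 x 0 Hd0 _ He2) as [d1 [Hd1 P1]].
  destruct (C2 x 0 Hd0 _ He2) as [d2 [Hd2 P2]].
  set (a := Rmin (Rmin d1 d2) t0 / 4).
  assert (Hm : 0 < Rmin (Rmin d1 d2) t0) by (repeat apply Rmin_pos; lra).
  pose proof (Rmin_l (Rmin d1 d2) t0). pose proof (Rmin_r (Rmin d1 d2) t0).
  pose proof (Rmin_l d1 d2). pose proof (Rmin_r d1 d2).
  assert (Ha : 0 < a) by (unfold a; lra).
  assert (Ha1 : 2 * a < d1) by (unfold a; lra).
  assert (Ha2 : 2 * a < d2) by (unfold a; lra).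
  assert (Ha3 : 2 * a < t0) by (unfold a; lra).
  destruct (MVT_cor2 (fun s => f s (2*a) - f s a) (fun s => fx s (2*a) - fx s a) x (x + a))
    as [xi [E1 Hxi]]; [lra| |].
  { intros c _. apply derivable_pt_lim_minus; apply Hfx; split; lra. }
  destruct (MVT_cor2 (fun t => fx xi t) (fun t => fxt xi t) a (2 * a)) as [eta [E2 Heta]]; [lra| |].
  { intros c Hc. apply (deriv_in_interior t0); [lra|]. apply Hfxt. split; lra. }
  destruct (MVT_cor2 (fun t => f (x + a) t - f x t) (fun t => ft (x + a) t - ft x t) a (2 * a))
    as [eta' [E3 Heta']]; [lra| |].
  { intros c Hc. apply derivable_pt_lim_minus; apply (deriv_in_interior t0); try lra;
    apply Hft; split; lra. }
  destruct (MVT_cor2 (fun s => ft s eta') (fun s => ftx s eta') x (x + a)) as [xi' [E4 Hxi']]; [lra| |].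
  { intros c _. apply Hftx. split; lra. }
  simpl in *.
  assert (Eq : fxt xi eta = ftx xi' eta').
  { assert (Hk : fxt xi eta * (a * a) = ftx xi' eta' * (a * a)).
    { replace (fxt xi eta * (a * a)) with ((fx xi (2 * a) - fx xi a) * (x + a - x)).
      2:{ rewrite E2. ring. }
      rewrite <- E1.
      replace (ftx xi' eta' * (a * a)) with ((ft (x + a) eta' - ft x eta') * (2 * a - a)).
      2:{ rewrite E4. ring. }
      rewrite <- E3. ring. }
    apply Rmult_eq_reg_r in Hk; auto. nra. }
  assert (Q1 : Rabs (fxt xi eta - fxt x 0) < eps / 2).
  { apply P1; [split; lra| |]; apply Rabs_def1; lra. }
  assert (Q2 : Rabs (ftx xi' eta' - ftx x 0) < eps / 2).
  { apply P2; [split; lra| |]; apply Rabs_def1; lra. }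
  rewrite Eq in Q1.
  replace (fxt x 0 - ftx x 0) with ((ftx xi' eta' - ftx x 0) - (ftx xi' eta' - fxt x 0)) by ring.
  eapply Rle_lt_trans; [apply Rabs_triang|]. rewrite Rabs_Ropp. lra.
Qed.

Lemma uniq_px t0 f g1 g2 : is_px t0 f g1 -> is_px t0 f g2 ->
  forall x t, tdom t0 t -> g1 x t = g2 x t.
Proof. intros H1 H2 x t Ht. eapply uniqueness_limite; [apply H1|apply H2]; auto. Qed.

Lemma uniq_pt t0 f g1 g2 : is_pt t0 f g1 -> is_pt t0 f g2 ->
  forall x t, tdom t0 t -> g1 x t = g2 x t.
Proof. intros H1 H2 x t Ht. eapply deriv_in_uniq; [eauto|apply H1|apply H2]; auto. Qed.

Lemma px_extf t0 f1 f2 g : (forall x t, tdom t0 t -> f1 x t = f2 x t) ->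
  is_px t0 f1 g -> is_px t0 f2 g.
Proof.
  intros He H x t Ht. replace (fun y => f2 y t) with (fun y => f1 y t).
  apply H; auto. apply functional_extensionality. intros; apply He; auto.
Qed.

Lemma pt_extf t0 f1 f2 g : (forall x t, tdom t0 t -> f1 x t = f2 x t) ->
  is_pt t0 f1 g -> is_pt t0 f2 g.
Proof. intros He H x t Ht. eapply deriv_in_ext; [|eauto|apply H; auto]. intros; apply He; auto. Qed.

Lemma px_extg t0 f g1 g2 : (forall x t, tdom t0 t -> g1 x t = g2 x t) ->
  is_px t0 f g1 -> is_px t0 f g2.
Proof. intros He H x t Ht. rewrite <- He; auto. Qed.

Lemma pt_extg t0 f g1 g2 : (forall x t, tdom t0 t -> g1 x t = g2 x t) ->
  is_pt t0 f g1 -> is_pt t0 f g2.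
Proof. intros He H x t Ht. rewrite <- He; auto. Qed.

Lemma cont2_ext t0 f g : (forall x t, tdom t0 t -> f x t = g x t) -> cont2 t0 f -> cont2 t0 g.
Proof.
  intros He H x t Ht eps Heps. destruct (H x t Ht eps Heps) as [d [Hd P]]. exists d; split; auto.
  intros x' t' Ht' H1 H2. rewrite <- !He; auto.
Qed.

Lemma cont2_x t0 f : 0 < t0 -> cont2 t0 f -> continuity (fun x => f x 0).
Proof.
  intros Ht H x. unfold continuity_pt, continue_in, limit1_in, limit_in; simpl; unfold R_dist.
  intros eps Heps. assert (Hd : tdom t0 0) by (split; lra).
  destruct (H x 0 Hd eps Heps) as [d [Hd0 P]]. exists d; split; auto.
  intros y [_ Hy]. apply P; auto. rewrite Rminus_0_r, Rabs_R0; auto.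
Qed.

Lemma extract t0 f Fx Ft Fxx Fxt Ftt : 0 < t0 -> Ck 3 t0 f ->
  is_px t0 f Fx -> is_pt t0 f Ft -> is_px t0 Fx Fxx -> is_pt t0 Fx Fxt -> is_pt t0 Ft Ftt ->
  cont2 t0 Fxx /\
  (forall x, derivable_pt_lim (fun y => Ft y 0) x (Fxt x 0)) /\
  exists g, continuity g /\ (forall x, derivable_pt_lim (fun y => Fxt y 0) x (g x)) /\
    (forall x, deriv_in (tdom t0) (fun s => Fxx x s) 0 (g x)).
Proof.
  intros Ht0 HC HFx HFt HFxx HFxt HFtt.
  destruct HC as [Cf [fx [ft [Hpx [Hpt [Ck2x Ck2t]]]]]].
  destruct Ck2x as [Cfx [fxx [fxt [Hpxx [Hpxt [Ck1xx Ck1xt]]]]]].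
  destruct Ck1xx as [Cfxx [fxxx [fxxt [_ [Hpxxt [_ [Cfxxt _]]]]]]].
  destruct Ck1xt as [Cfxt [fxtx [fxtt [Hpxtx [_ [[Cfxtx _] _]]]]]].
  destruct Ck2t as [Cft [ftx [ftt [Hptx [_ [Ck1tx _]]]]]].
  destruct Ck1tx as [Cftx _].
  pose proof (uniq_px _ _ _ _ Hpx HFx) as Ex.
  pose proof (uniq_pt _ _ _ _ Hpt HFt) as Et.
  pose proof (px_extf _ _ _ _ Ex Hpxx) as Hpxx'.
  pose proof (uniq_px _ _ _ _ Hpxx' HFxx) as Exx.
  pose proof (pt_extf _ _ _ _ Ex Hpxt) as Hpxt'.
  pose proof (uniq_pt _ _ _ _ Hpxt' HFxt) as Ext.
  pose proof (pt_extf _ _ _ _ Exx Hpxxt) as Hpxxt'.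
  pose proof (px_extf _ _ _ _ Ext Hpxtx) as Hpxtx'.
  pose proof (px_extf _ _ _ _ Et Hptx) as Hptx'.
  assert (S1 := schwarz _ _ _ _ _ _ Ht0 HFxx HFxt Hpxxt' Hpxtx' Cfxxt Cfxtx).
  assert (S2 := schwarz _ _ _ _ _ _ Ht0 HFx HFt HFxt Hptx' (cont2_ext _ _ _ Ext Cfxt) Cftx).
  assert (Hd0 : tdom t0 0) by (split; lra).
  split; [exact (cont2_ext _ _ _ Exx Cfxx)|]. split.
  { intros x. rewrite S2. apply Hptx'; auto. }
  exists (fun x => fxtx x 0). split; [apply (cont2_x t0); auto|]. split.
  - intros x. apply Hpxtx'; auto.
  - intros x. rewrite <- S1. apply Hpxxt'; auto.
Qed.

Lemma D_eq f x l l' : derivable_pt_lim f x l -> l = l' -> derivable_pt_lim f x l'.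
Proof. intros H ->; auto. Qed.
Lemma D_plus f g x l m : derivable_pt_lim f x l -> derivable_pt_lim g x m ->
  derivable_pt_lim (fun y => f y + g y) x (l + m).
Proof. intros; apply (derivable_pt_lim_plus f g); auto. Qed.
Lemma D_minus f g x l m : derivable_pt_lim f x l -> derivable_pt_lim g x m ->
  derivable_pt_lim (fun y => f y - g y) x (l - m).
Proof. intros; apply (derivable_pt_lim_minus f g); auto. Qed.
Lemma D_mult f g x l m : derivable_pt_lim f x l -> derivable_pt_lim g x m ->
  derivable_pt_lim (fun y => f y * g y) x (l * g x + f x * m).
Proof. intros; apply (derivable_pt_lim_mult f g); auto. Qed.
Lemma D_inv f x l : derivable_pt_lim f x l -> f x <> 0 ->
  derivable_pt_lim (fun y => / f y) x (- l / (f x)^2).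
Proof.
  intros H Hn. replace (fun y => / f y) with (fct_cte 1 / f)%F.
  2:{ apply functional_extensionality; intros y; unfold fct_cte, div_fct, Rdiv; ring. }
  eapply D_eq.
  - apply (derivable_pt_lim_div (fct_cte 1) f x 0 l); auto. apply derivable_pt_lim_const.
  - unfold fct_cte, Rsqr. field; auto.
Qed.
Lemma D_sqrt f x l : derivable_pt_lim f x l -> 0 < f x ->
  derivable_pt_lim (fun y => sqrt (f y)) x (/ (2 * sqrt (f x)) * l).
Proof. intros H Hp. apply (derivable_pt_lim_comp f sqrt); auto. apply derivable_pt_lim_sqrt; auto. Qed.
Lemma D_ln f x l : derivable_pt_lim f x l -> 0 < f x ->
  derivable_pt_lim (fun y => ln (f y)) x (/ (f x) * l).
Proof. intros H Hp. apply (derivable_pt_lim_comp f ln); auto. apply derivable_pt_lim_ln; auto. Qed.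

Definition vplus (u v : V3) : V3 := mkV (vx u + vx v) (vy u + vy v) (vz u + vz v).

Definition dvec (u : R -> V3) (x : R) (u' : V3) : Prop :=
  derivable_pt_lim (fun y => vx (u y)) x (vx u') /\
  derivable_pt_lim (fun y => vy (u y)) x (vy u') /\
  derivable_pt_lim (fun y => vz (u y)) x (vz u').

Lemma dvec_dot u v x u' v' : dvec u x u' -> dvec v x v' ->
  derivable_pt_lim (fun y => dot (u y) (v y)) x (dot u' (v x) + dot (u x) v').
Proof.
  intros [H1 [H2 H3]] [G1 [G2 G3]]. unfold dot. eapply D_eq.
  - apply D_plus; [apply D_plus|]; apply D_mult; eauto.
  - cbv beta; ring.
Qed.

Lemma dvec_cross u v x u' v' : dvec u x u' -> dvec v x v' ->
  dvec (fun y => cross (u y) (v y)) x (vplus (cross u' (v x)) (cross (u x) v')).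
Proof.
  intros [H1 [H2 H3]] [G1 [G2 G3]]. unfold cross, vplus, mkV, vx, vy, vz in *; simpl.
  repeat split; (eapply D_eq; [apply D_minus; apply D_mult; eauto| ]).
  all: unfold vx, vy, vz; cbv beta; simpl; ring.
Qed.

Definition liftv (U : R -> V3) (u' : V3) : R -> V3 :=
  fun s => mkV (liftf (fun s => vx (U s)) (vx u') s) (liftf (fun s => vy (U s)) (vy u') s)
               (liftf (fun s => vz (U s)) (vz u') s).

Lemma liftv_eq U u' s : 0 <= s -> liftv U u' s = U s.
Proof.
  intros Hs. unfold liftv. rewrite !liftf_eq; auto. unfold mkV, vx, vy, vz.
  destruct (U s) as [[? ?] ?]; reflexivity.
Qed.

Lemma liftv_d t0 U u' : 0 < t0 ->
  deriv_in (tdom t0) (fun s => vx (U s)) 0 (vx u') ->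
  deriv_in (tdom t0) (fun s => vy (U s)) 0 (vy u') ->
  deriv_in (tdom t0) (fun s => vz (U s)) 0 (vz u') ->
  dvec (liftv U u') 0 u'.
Proof.
  intros Ht H1 H2 H3. split; [|split]; eapply lift0; eauto.
Qed.

Lemma core_poly (a b p q r w : V3) :
  let C := cross a b in
  let D := dot q C in let E := dot a a in let S := dot C C in
  let F := dot a b in let G := dot b b in
  let Num := dot w C + dot p (vplus (cross q b) (cross a r)) in
  let D' := dot w C + dot q (vplus (cross p b) (cross a q)) in
  let X := dot p (cross C a) in let R := dot r C in
  Num*E*S - D'*E*S + 2*dot p a*D*S + X*(R*E - 2*D*F) =
  E*(2*(G*dot q a - F*dot q b) + E*dot r b - F*dot r a) * dot p C.
Proof.
  destruct a as [[a1 a2] a3], b as [[b1 b2] b3], p as [[p1 p2] p3], q as [[q1 q2] q3],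
    r as [[r1 r2] r3], w as [[w1 w2] w3].
  unfold dot, cross, vplus, mkV, vx, vy, vz; simpl. ring.
Qed.

Lemma dot_scal_r u k v : dot u (scal k v) = k * dot u v.
Proof. unfold dot, scal, mkV, vx, vy, vz; simpl; ring. Qed.
Lemma dot_cross_scal p k u v : dot p (cross (scal k u) v) = k * dot p (cross u v).
Proof. unfold dot, cross, scal, mkV, vx, vy, vz; simpl; ring. Qed.
Lemma lagrange a b : dot (cross a b) (cross a b) = dot a a * dot b b - (dot a b)^2.
Proof. unfold dot, cross, mkV, vx, vy, vz; simpl; ring. Qed.
Lemma dot_nonneg u : 0 <= dot u u.
Proof. unfold dot. nra. Qed.
Lemma dot_pos u : u <> vzero -> 0 < dot u u.
Proof.
  intros H. destruct (dot_nonneg u) as [|H0]; auto. exfalso. apply H.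
  destruct u as [[u1 u2] u3]. unfold dot, vx, vy, vz in H0; simpl in H0.
  assert (u1 = 0) by nra. assert (u2 = 0) by nra. assert (u3 = 0) by nra. subst. reflexivity.
Qed.

Lemma alg_main (a b p q r w : V3) (sgn : R) :
  let C := cross a b in let D := dot q C in let E := dot a a in
  dot p C = 0 -> D <> 0 -> C <> vzero -> ((sgn = 1 /\ 0 < D) \/ (sgn = -1 /\ D < 0)) ->
  / sfM a b q * ((dot w C + dot p (vplus (cross q b) (cross a r))) / vnorm C)
  = ((dot w C + dot q (vplus (cross p b) (cross a q))) / D - 2 * dot p a / E)
    - sgn * (geod_curv a p (unormal a b) * kn_perp a b p q r
             * / sqrt (Rabs (gaussK a b p q r)) * vnorm a).
Proof.
  intros C D E HL HD HC Hsgn.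
  set (S := dot C C).
  assert (HS : 0 < S) by (apply dot_pos; auto).
  set (F := dot a b). set (G := dot b b).
  assert (HSl : S = E * G - F^2) by (apply lagrange).
  assert (HE : 0 < E).
  { assert (H : 0 <= E) by (apply dot_nonneg).
    destruct H as [|H]; auto. rewrite <- H in HSl. nra. }
  set (sc := vnorm C). assert (Hsc : sc * sc = S) by (apply sqrt_sqrt; lra).
  assert (Hsc0 : 0 < sc) by (apply sqrt_lt_R0; exact HS).
  set (sa := vnorm a). assert (Hsa : sa * sa = E) by (apply sqrt_sqrt; lra).
  assert (Hsa0 : 0 < sa) by (apply sqrt_lt_R0; exact HE).
  assert (HsgnD : sgn * D > 0) by (destruct Hsgn as [[-> ?]|[-> ?]]; lra).
  assert (Hsgn0 : sgn <> 0) by (destruct Hsgn as [[-> ?]|[-> ?]]; lra).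
  assert (HM : sfM a b q = / sc * D) by (unfold sfM, unormal; apply dot_scal_r).
  assert (HLL : sfL a b p = 0) by (unfold sfL, unormal; rewrite dot_scal_r; fold C sc; rewrite HL; ring).
  assert (HN : sfN a b r = / sc * dot r C) by (unfold sfN, unormal; apply dot_scal_r).
  set (X := dot p (cross C a)). set (R0 := dot r C).
  assert (HG : geod_curv a p (unormal a b) = / sc * X / (sa * E)).
  { unfold geod_curv, unormal. rewrite dot_cross_scal. fold C sc X sa.
    rewrite <- Hsa. field. lra. }
  assert (HK : kn_perp a b p q r = / sc * (R0 * E - 2 * D * F) / S).
  { unfold kn_perp, normal_curv. rewrite HLL, HM, HN. unfold ffE, ffF, ffG. fold E F G R0.
    replace (E * (- F) ^ 2 + 2 * F * - F * E + G * E ^ 2) with (E * S) by (rewrite HSl; ring).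
    field; lra. }
  assert (HQ : / sqrt (Rabs (gaussK a b p q r)) = S / (sgn * D)).
  { unfold gaussK. rewrite HLL, HM. unfold ffE, ffF, ffG. fold E F G.
    replace ((0 * sfN a b r - (/ sc * D) ^ 2) / (E * G - F ^ 2)) with (- ((D / S) ^ 2)).
    2:{ rewrite <- HSl. rewrite <- Hsc. field. lra. }
    replace ((D / S) ^ 2) with ((sgn * D / S) ^ 2) by (destruct Hsgn as [[-> _]|[-> _]]; field; lra).
    rewrite Rabs_Ropp, Rabs_right by (apply Rle_ge, pow2_ge_0).
    rewrite sqrt_pow2 by (apply Rlt_le, Rdiv_lt_0_compat; lra).
    field. split; lra. }
  set (Num := dot w C + dot p (vplus (cross q b) (cross a r))).
  set (D' := dot w C + dot q (vplus (cross p b) (cross a q))).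
  assert (Hz : Num*E*S - D'*E*S + 2*dot p a*D*S + X*(R0*E - 2*D*F) = 0).
  { transitivity (E*(2*(G*dot q a - F*dot q b) + E*dot r b - F*dot r a) * dot p C).
    - exact (core_poly a b p q r w).
    - rewrite HL; ring. }
  rewrite HM, HG, HK, HQ. fold sa.
  assert (Heq : sgn * (/ sc * X / (sa * E) * (/ sc * (R0 * E - 2 * D * F) / S) * (S / (sgn * D)) * sa)
     = X * (R0 * E - 2 * D * F) / ((sc * sc) * E * D)).
  { field. repeat split; lra. }
  rewrite Hsc in Heq. rewrite Heq.
  apply Rminus_diag_uniq.
  replace (/ (/ sc * D) * (Num / sc) - (D' / D - 2 * dot p a / E - X * (R0 * E - 2 * D * F) / (S * E * D)))
    with ((Num*E*S - D'*E*S + 2*dot p a*D*S + X*(R0*E - 2*D*F)) / (D * E * S)).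
  2:{ field. repeat split; lra. }
  rewrite Hz. field. repeat split; lra.
Qed.

Lemma C_plus f g x : continuity_pt f x -> continuity_pt g x -> continuity_pt (fun y => f y + g y) x.
Proof. intros; apply (continuity_pt_plus f g); auto. Qed.
Lemma C_minus f g x : continuity_pt f x -> continuity_pt g x -> continuity_pt (fun y => f y - g y) x.
Proof. intros; apply (continuity_pt_minus f g); auto. Qed.
Lemma C_mult f g x : continuity_pt f x -> continuity_pt g x -> continuity_pt (fun y => f y * g y) x.
Proof. intros; apply (continuity_pt_mult f g); auto. Qed.
Lemma C_div f g x : continuity_pt f x -> continuity_pt g x -> g x <> 0 -> continuity_pt (fun y => f y / g y) x.
Proof. intros; apply (continuity_pt_div f g); auto. Qed.
Lemma C_const c x : continuity_pt (fun _ => c) x.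
Proof. apply (continuity_pt_const (fun _ => c)). intros ? ?; reflexivity. Qed.

Definition cvec (u : R -> V3) (x : R) : Prop :=
  continuity_pt (fun y => vx (u y)) x /\ continuity_pt (fun y => vy (u y)) x /\
  continuity_pt (fun y => vz (u y)) x.

Lemma cvec_dot u v x : cvec u x -> cvec v x -> continuity_pt (fun y => dot (u y) (v y)) x.
Proof. intros [? [? ?]] [? [? ?]]. unfold dot. repeat apply C_plus; apply C_mult; auto. Qed.
Lemma cvec_cross u v x : cvec u x -> cvec v x -> cvec (fun y => cross (u y) (v y)) x.
Proof.
  intros [? [? ?]] [? [? ?]]. unfold cross, mkV, vx, vy, vz in *; simpl.
  repeat split; apply C_minus; apply C_mult; auto.
Qed.
Lemma cvec_vplus u v x : cvec u x -> cvec v x -> cvec (fun y => vplus (u y) (v y)) x.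
Proof.
  intros [? [? ?]] [? [? ?]]. unfold vplus, mkV, vx, vy, vz in *; simpl.
  repeat split; apply C_plus; auto.
Qed.
Lemma dvec_cvec u x u' : dvec u x u' -> cvec u x.
Proof.
  intros [H1 [H2 H3]]; repeat split; eapply derivable_continuous_pt; eexists; eauto.
Qed.

Lemma shift_deriv f x c l : derivable_pt_lim f (x + c) l -> derivable_pt_lim (fun y => f (y + c)) x l.
Proof.
  intros H eps Heps. destruct (H eps Heps) as [d P]. exists d. intros h Hh Hl.
  replace (x + h + c) with (x + c + h) by ring. apply P; auto.
Qed.

Lemma per_px t0 x0 f g : (forall x t, tdom t0 t -> f (x + x0) t = f x t) -> is_px t0 f g ->
  forall x t, tdom t0 t -> g (x + x0) t = g x t.
Proof.
  intros Hp H x t Ht.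
  assert (H1 := shift_deriv (fun y => f y t) x x0 _ (H (x + x0) t Ht)). cbv beta in H1.
  replace (fun y => f (y + x0) t) with (fun y => f y t) in H1.
  2:{ apply functional_extensionality; intros; rewrite Hp; auto. }
  eapply uniqueness_limite; [exact H1| apply H; auto].
Qed.

Lemma per_pt t0 x0 f g : (forall x t, tdom t0 t -> f (x + x0) t = f x t) -> is_pt t0 f g ->
  forall x t, tdom t0 t -> g (x + x0) t = g x t.
Proof.
  intros Hp H x t Ht. eapply deriv_in_uniq; [exact Ht|apply H; auto|].
  eapply deriv_in_ext; [|exact Ht|apply (H x t Ht)]. intros s Hs; rewrite Hp; auto.
Qed.

Lemma sfL_eq a b p : sfL a b p = dot p (cross a b) * / vnorm (cross a b).
Proof. unfold sfL, unormal. rewrite dot_scal_r. ring. Qed.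

Lemma dL_formula t0 (A B P A' B' P' : R -> V3) qa rb wp l : 0 < t0 ->
  dvec A 0 qa -> dvec B 0 rb -> dvec P 0 wp ->
  (forall s, 0 <= s -> A s = A' s /\ B s = B' s /\ P s = P' s) ->
  cross (A 0) (B 0) <> vzero -> dot (P 0) (cross (A 0) (B 0)) = 0 ->
  deriv_in (tdom t0) (fun s => sfL (A' s) (B' s) (P' s)) 0 l ->
  l = (dot wp (cross (A 0) (B 0)) + dot (P 0) (vplus (cross qa (B 0)) (cross (A 0) rb)))
       / vnorm (cross (A 0) (B 0)).
Proof.
  intros Ht HA HB HP Heq HC Hz Hl.
  assert (HS : 0 < dot (cross (A 0) (B 0)) (cross (A 0) (B 0))) by (apply dot_pos; auto).
  assert (Hn : 0 < vnorm (cross (A 0) (B 0))) by (apply sqrt_lt_R0; auto).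
  assert (Hd : derivable_pt_lim (fun s => dot (P s) (cross (A s) (B s)) * / vnorm (cross (A s) (B s))) 0
     ((dot wp (cross (A 0) (B 0)) + dot (P 0) (vplus (cross qa (B 0)) (cross (A 0) rb)))
       / vnorm (cross (A 0) (B 0)))).
  { assert (HCd := dvec_cross _ _ _ _ _ HA HB).
    eapply D_eq.
    - apply D_mult.
      + apply dvec_dot; eauto.
      + apply D_inv; [|cbv beta; lra]. unfold vnorm. apply D_sqrt; [|exact HS].
        apply dvec_dot; eauto.
    - cbv beta. rewrite Hz. unfold Rdiv. ring. }
  eapply deriv_in_uniq; [|exact Hl|].
  - split; lra.
  - eapply drop0; [exact Ht|exact Hd|]. intros s [Hs _].
    destruct (Heq s Hs) as [-> [-> ->]]. rewrite sfL_eq. reflexivity.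
Qed.

Lemma sign_const f : continuity f -> (forall y, f y <> 0) -> 0 < f 0 -> forall y, 0 <= y -> 0 < f y.
Proof.
  intros Hc Hn H0 y Hy. destruct (Rlt_or_le 0 (f y)) as [|Hle]; auto. exfalso.
  assert (Hlt : f y < 0) by (destruct Hle; auto; exfalso; apply (Hn y); auto).
  destruct Hy as [Hy|Hy]; [|subst; lra].
  destruct (IVT (fun z => - f z) 0 y) as [z [_ Hz]]; auto.
  - apply continuity_opp; auto.
  - lra.
  - lra.
  - apply (Hn z). lra.
Qed.
From Coquelicot Require Import Coquelicot.

Lemma final_comb (f1 f2 phi : R -> R) x0 sgn (pr1 : Riemann_integrable f1 0 x0)
  (pr2 : Riemann_integrable f2 0 x0) : 0 < x0 -> is_RInt phi 0 x0 0 ->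
  (forall y, 0 <= y <= x0 -> f1 y = phi y - sgn * f2 y) ->
  RiemannInt pr1 = - sgn * RiemannInt pr2.
Proof.
  intros Hx Hphi Heq. rewrite <- !RInt_Reals.
  apply is_RInt_unique.
  apply is_RInt_ext with (fun y => phi y - sgn * f2 y).
  { intros y Hy. rewrite Rmin_left, Rmax_right in Hy by lra. symmetry; apply Heq; lra. }
  assert (H2 : is_RInt f2 0 x0 (RInt f2 0 x0)) by (exact (RInt_correct f2 0 x0 (ex_RInt_Reals_1 _ _ _ pr2))).
  assert (H3 := is_RInt_minus _ _ _ _ _ _ Hphi (is_RInt_scal _ _ _ sgn _ H2)).
  replace (- sgn * RInt f2 0 x0) with (minus 0 (scal sgn (RInt f2 0 x0))).
  - exact H3.
  - unfold minus, plus, opp, scal; simpl. unfold mult; simpl. ring.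
Qed.

Lemma D_scal c f x l : derivable_pt_lim f x l -> derivable_pt_lim (fun y => c * f y) x (c * l).
Proof.
  intros H. eapply D_eq; [apply (D_mult (fun _ => c) f x 0 l); [apply (derivable_pt_lim_const c)|exact H]|ring].
Qed.

Lemma E_pos a b : cross a b <> vzero -> 0 < dot a a.
Proof.
  intros H. pose proof (dot_pos _ H) as HS. rewrite lagrange in HS.
  assert (H0 : 0 <= dot a a) by apply dot_nonneg. pose proof (dot_nonneg b).
  destruct H0 as [|H0]; auto. rewrite <- H0 in HS. nra.
Qed.

Lemma vnorm_pos a b : cross a b <> vzero -> 0 < vnorm (cross a b).
Proof. intros H; apply sqrt_lt_R0, dot_pos; auto. Qed.

Lemma asym_L a b p q r : cross a b <> vzero -> normal_curv a b p q r 1 0 = 0 ->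
  dot p (cross a b) = 0.
Proof.
  intros HC H. unfold normal_curv in H. pose proof (E_pos _ _ HC). unfold ffE in H.
  pose proof (vnorm_pos _ _ HC).
  replace ((sfL a b p * 1 ^ 2 + 2 * sfM a b q * 1 * 0 + sfN a b r * 0 ^ 2) /
    (dot a a * 1 ^ 2 + 2 * ffF a b * 1 * 0 + ffG a b * 0 ^ 2)) with (sfL a b p / dot a a) in H
    by (field; lra).
  rewrite sfL_eq in H.
  apply Rmult_eq_reg_r with (/ vnorm (cross a b) / dot a a).
  - unfold Rdiv in *. rewrite Rmult_0_l. rewrite <- H. ring.
  - apply Rgt_not_eq. apply Rdiv_lt_0_compat; [apply Rinv_0_lt_compat|]; lra.
Qed.

Lemma sfM_eq a b q : sfM a b q = dot q (cross a b) * / vnorm (cross a b).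
Proof. unfold sfM, unormal. rewrite dot_scal_r. ring. Qed.

Lemma K_D a b p q r : cross a b <> vzero -> dot p (cross a b) = 0 ->
  gaussK a b p q r < 0 -> dot q (cross a b) <> 0.
Proof.
  intros HC HL HK HD. unfold gaussK in HK. rewrite !sfM_eq in HK. rewrite HD, HL in HK.
  replace ((0 * / vnorm (cross a b) * sfN a b r - (0 * / vnorm (cross a b)) ^ 2) /
     (ffE a b * ffG a b - ffF a b ^ 2)) with 0 in HK by (unfold Rdiv; ring). lra.
Qed.

Lemma v3_eq (u v : V3) : vx u = vx v -> vy u = vy v -> vz u = vz v -> u = v.
Proof. destruct u as [[? ?] ?], v as [[? ?] ?]; unfold vx, vy, vz; simpl; intros; subst; auto. Qed.
Lemma dot_comm u v : dot u v = dot v u.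
Proof. unfold dot; ring. Qed.

Theorem mainTheorem6
  (x0 t0 : R) (Hx0 : 0 < x0) (Ht0 : 0 < t0)
  (X Xx Xt Xxx Xxt Xtt : R -> R -> V3)
  (HC3 : Ck_v 3 t0 X)
  (HXx : is_px_v t0 X Xx) (HXt : is_pt_v t0 X Xt)
  (HXxx : is_px_v t0 Xx Xxx) (HXxt : is_pt_v t0 Xx Xxt) (HXtt : is_pt_v t0 Xt Xtt)
  (Hper : forall x t, tdom t0 t -> X (x + x0) t = X x t)
  (Hinj : forall x x' t t', 0 <= x < x0 -> 0 <= x' < x0 -> tdom t0 t -> tdom t0 t' ->
            X x t = X x' t' -> x = x' /\ t = t')
  (Hreg : forall x t, tdom t0 t -> cross (Xx x t) (Xt x t) <> vzero)
  (Hasym : forall x, normal_curv (Xx x 0) (Xt x 0) (Xxx x 0) (Xxt x 0) (Xtt x 0) 1 0 = 0)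
  (HK : forall x, gaussK (Xx x 0) (Xt x 0) (Xxx x 0) (Xxt x 0) (Xtt x 0) < 0)
  (dL : R -> R)
  (HdL : forall x, deriv_in (tdom t0)
           (fun s => sfL (Xx x s) (Xt x s) (Xxx x s)) 0 (dL x)) :
  forall (pr1 : Riemann_integrable
                  (fun x => / sfM (Xx x 0) (Xt x 0) (Xxt x 0) * dL x) 0 x0)
         (pr2 : Riemann_integrable
                  (fun x => geod_curv (Xx x 0) (Xxx x 0) (unormal (Xx x 0) (Xt x 0))
                            * kn_perp (Xx x 0) (Xt x 0) (Xxx x 0) (Xxt x 0) (Xtt x 0)
                            * / sqrt (Rabs (gaussK (Xx x 0) (Xt x 0) (Xxx x 0) (Xxt x 0) (Xtt x 0)))
                            * vnorm (Xx x 0)) 0 x0),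
    (0 < sfM (Xx 0 0) (Xt 0 0) (Xxt 0 0) -> RiemannInt pr1 = - RiemannInt pr2) /\
    (sfM (Xx 0 0) (Xt 0 0) (Xxt 0 0) < 0 -> RiemannInt pr1 = RiemannInt pr2).
Proof.
  intros pr1 pr2.
  assert (Hd0 : tdom t0 0) by (split; lra).
  destruct HC3 as [C3x [C3y C3z]].
  destruct HXx as [HXx1 [HXx2 HXx3]]. destruct HXt as [HXt1 [HXt2 HXt3]].
  destruct HXxx as [HXxx1 [HXxx2 HXxx3]]. destruct HXxt as [HXxt1 [HXxt2 HXxt3]].
  destruct HXtt as [HXtt1 [HXtt2 HXtt3]].
  destruct (extract _ _ _ _ _ _ _ Ht0 C3x HXx1 HXt1 HXxx1 HXxt1 HXtt1) as [Cp1 [E11 [g1 [Cg1 [Dg1 Tg1]]]]].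
  destruct (extract _ _ _ _ _ _ _ Ht0 C3y HXx2 HXt2 HXxx2 HXxt2 HXtt2) as [Cp2 [E12 [g2 [Cg2 [Dg2 Tg2]]]]].
  destruct (extract _ _ _ _ _ _ _ Ht0 C3z HXx3 HXt3 HXxx3 HXxt3 HXtt3) as [Cp3 [E13 [g3 [Cg3 [Dg3 Tg3]]]]].
  set (w := fun y => mkV (g1 y) (g2 y) (g3 y)).
  assert (F1 : forall y, dvec (fun z => Xx z 0) y (Xxx y 0)).
  { intros y; split; [|split]; [apply HXxx1|apply HXxx2|apply HXxx3]; auto. }
  assert (F2 : forall y, dvec (fun z => Xt z 0) y (Xxt y 0)).
  { intros y; split; [|split]; [apply E11|apply E12|apply E13]. }
  assert (F3 : forall y, dvec (fun z => Xxt z 0) y (w y)).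
  { intros y; split; [|split]; [apply Dg1|apply Dg2|apply Dg3]. }
  assert (HC : forall y, cross (Xx y 0) (Xt y 0) <> vzero) by (intros; apply Hreg; auto).
  assert (HL : forall y, dot (Xxx y 0) (cross (Xx y 0) (Xt y 0)) = 0).
  { intros y; eapply asym_L; [apply HC|apply Hasym]. }
  assert (HD : forall y, dot (Xxt y 0) (cross (Xx y 0) (Xt y 0)) <> 0).
  { intros y; eapply K_D; [apply HC|apply HL|apply HK]. }
  assert (HdLf : forall y, dL y =
    (dot (w y) (cross (Xx y 0) (Xt y 0)) +
     dot (Xxx y 0) (vplus (cross (Xxt y 0) (Xt y 0)) (cross (Xx y 0) (Xtt y 0))))
    / vnorm (cross (Xx y 0) (Xt y 0))).
  { intros y.
    assert (HA := liftv_d t0 (fun s => Xx y s) (Xxt y 0) Ht0 (HXxt1 y 0 Hd0) (HXxt2 y 0 Hd0) (HXxt3 y 0 Hd0)).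
    assert (HB := liftv_d t0 (fun s => Xt y s) (Xtt y 0) Ht0 (HXtt1 y 0 Hd0) (HXtt2 y 0 Hd0) (HXtt3 y 0 Hd0)).
    assert (HP := liftv_d t0 (fun s => Xxx y s) (w y) Ht0 (Tg1 y) (Tg2 y) (Tg3 y)).
    assert (E0 : forall U u', liftv U u' 0 = U 0) by (intros; apply liftv_eq; lra).
    assert (H := dL_formula t0 _ _ _ (fun s => Xx y s) (fun s => Xt y s) (fun s => Xxx y s) _ _ _ (dL y)
                  Ht0 HA HB HP).
    rewrite !E0 in H. apply H.
    - intros s Hs. rewrite !liftv_eq; auto.
    - apply HC.
    - apply HL.
    - apply HdL. }
  assert (PX1 : forall x t, tdom t0 t -> vx (X (x + x0) t) = vx (X x t)) by (intros; rewrite Hper; auto).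
  assert (PX2 : forall x t, tdom t0 t -> vy (X (x + x0) t) = vy (X x t)) by (intros; rewrite Hper; auto).
  assert (PX3 : forall x t, tdom t0 t -> vz (X (x + x0) t) = vz (X x t)) by (intros; rewrite Hper; auto).
  pose proof (per_px t0 x0 _ _ PX1 HXx1) as PXx1. pose proof (per_px t0 x0 _ _ PX2 HXx2) as PXx2.
  pose proof (per_px t0 x0 _ _ PX3 HXx3) as PXx3.
  pose proof (per_pt t0 x0 _ _ PX1 HXt1) as PXt1. pose proof (per_pt t0 x0 _ _ PX2 HXt2) as PXt2.
  pose proof (per_pt t0 x0 _ _ PX3 HXt3) as PXt3.
  pose proof (per_pt t0 x0 _ _ PXx1 HXxt1) as PXxt1. pose proof (per_pt t0 x0 _ _ PXx2 HXxt2) as PXxt2.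
  pose proof (per_pt t0 x0 _ _ PXx3 HXxt3) as PXxt3.
  assert (Pa : Xx x0 0 = Xx 0 0).
  { assert (H : Xx (0 + x0) 0 = Xx 0 0) by (apply v3_eq; auto). rewrite Rplus_0_l in H; exact H. }
  assert (Pb : Xt x0 0 = Xt 0 0).
  { assert (H : Xt (0 + x0) 0 = Xt 0 0) by (apply v3_eq; auto). rewrite Rplus_0_l in H; exact H. }
  assert (Pq : Xxt x0 0 = Xxt 0 0).
  { assert (H : Xxt (0 + x0) 0 = Xxt 0 0) by (apply v3_eq; auto). rewrite Rplus_0_l in H; exact H. }
  set (Df := fun y => dot (Xxt y 0) (cross (Xx y 0) (Xt y 0))).
  set (Ef := fun y => dot (Xx y 0) (Xx y 0)).
  set (D' := fun y => dot (w y) (cross (Xx y 0) (Xt y 0)) +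
     dot (Xxt y 0) (vplus (cross (Xxx y 0) (Xt y 0)) (cross (Xx y 0) (Xxt y 0)))).
  assert (dD : forall y, derivable_pt_lim Df y (D' y)).
  { intros y. unfold Df, D'. eapply D_eq.
    - apply dvec_dot; [apply F3|apply dvec_cross; [apply F1|apply F2]].
    - reflexivity. }
  assert (HE : forall y, 0 < Ef y) by (intros y; apply (E_pos _ _ (HC y))).
  assert (cont_D : continuity Df).
  { intros y. apply derivable_continuous_pt. exists (D' y). apply dD. }
  set (Phi := fun y => / 2 * ln (Df y * Df y) - ln (Ef y)).
  set (phi := fun y => D' y / Df y - 2 * dot (Xxx y 0) (Xx y 0) / Ef y).
  assert (dPhi : forall y, derivable_pt_lim Phi y (phi y)).
  { intros y. unfold Phi, phi. eapply D_eq.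
    - apply D_minus.
      + apply D_scal. apply D_ln; [apply D_mult; apply dD|].
        assert (HDy := HD y). fold (Df y) in HDy. nra.
      + apply D_ln; [apply dvec_dot; apply F1|apply HE].
    - assert (HDy := HD y). fold (Df y) in HDy. pose proof (HE y).
      cbv beta. rewrite (dot_comm (Xx y 0)). field. split; lra. }
  assert (ca : forall y, cvec (fun z => Xx z 0) y) by (intros; eapply dvec_cvec; apply F1).
  assert (cb : forall y, cvec (fun z => Xt z 0) y) by (intros; eapply dvec_cvec; apply F2).
  assert (cq : forall y, cvec (fun z => Xxt z 0) y) by (intros; eapply dvec_cvec; apply F3).
  assert (cp : forall y, cvec (fun z => Xxx z 0) y).
  { intros y; split; [|split]; [apply (cont2_x t0 _ Ht0 Cp1)|apply (cont2_x t0 _ Ht0 Cp2)|apply (cont2_x t0 _ Ht0 Cp3)]. }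
  assert (cw : forall y, cvec w y) by (intros y; split; [|split]; [apply Cg1|apply Cg2|apply Cg3]).
  assert (cphi : forall y, continuity_pt phi y).
  { intros y. unfold phi, D'. apply C_minus.
    - apply C_div; [|apply cont_D|apply HD]. apply C_plus.
      + apply cvec_dot; [apply cw|apply cvec_cross; [apply ca|apply cb]].
      + apply cvec_dot; [apply cq|apply cvec_vplus; apply cvec_cross; auto].
    - apply C_div; [apply C_mult; [apply C_const|apply cvec_dot; auto]|apply cvec_dot; auto|].
      apply Rgt_not_eq, HE. }
  assert (Hftc : is_RInt phi 0 x0 0).
  { assert (H := is_RInt_derive Phi phi 0 x0).
    assert (Hv : forall l l', is_RInt phi 0 x0 l -> l = l' -> is_RInt phi 0 x0 l') by (intros l l' Hl <-; exact Hl).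
    eapply Hv; [apply H|].
    + intros y _. apply is_derive_Reals, dPhi.
    + intros y _. apply continuity_pt_filterlim, cphi.
    + unfold Phi, Df, Ef. rewrite Pa, Pb, Pq. unfold minus, plus, opp; simpl. ring. }
  split.
  - intros HM. rewrite sfM_eq in HM.
    assert (HD0 : 0 < Df 0).
    { pose proof (vnorm_pos _ _ (HC 0)). unfold Df. 
      assert (0 < / vnorm (cross (Xx 0 0) (Xt 0 0))) by (apply Rinv_0_lt_compat; lra). nra. }
    assert (Hs := sign_const Df cont_D HD HD0).
    replace (- RiemannInt pr2) with (- 1 * RiemannInt pr2) by ring.
    apply final_comb with phi; auto.
    intros y Hy. rewrite HdLf. unfold phi, D', Df, Ef. apply alg_main.
    + apply HL.
    + apply HD.
    + apply HC.
    + left. split; auto. apply Hs. lra.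
  - intros HM. rewrite sfM_eq in HM.
    assert (HD0 : 0 < (fun y => - Df y) 0).
    { cbv beta. pose proof (vnorm_pos _ _ (HC 0)). unfold Df. 
      assert (0 < / vnorm (cross (Xx 0 0) (Xt 0 0))) by (apply Rinv_0_lt_compat; lra). nra. }
    assert (HDn : forall y, (fun y => - Df y) y <> 0).
    { intros y Hy. cbv beta in Hy. apply (HD y). unfold Df in Hy. lra. }
    assert (Hs := sign_const (fun y => - Df y) (continuity_opp _ cont_D) HDn HD0).
    replace (RiemannInt pr2) with (- (-1) * RiemannInt pr2) by ring.
    apply final_comb with phi; auto.
    intros y Hy. rewrite HdLf. unfold phi, D', Df, Ef. apply alg_main.
    + apply HL.
    + apply HD.
    + apply HC.
    + right. split; auto. assert (H := Hs y ltac:(lra)). cbv beta in H. unfold Df in H. lra.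
Qed.
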